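(* Let $G$ be a topological group, let $(W_n)_{n\ge1}$ be an increasing sequence of subsets of $G$ with $\bigcup_{n\ge1}W_n=G$, let $Q\subseteq G$ and set $Q_n=W_n\cup Q$. Let $\varepsilon_0>0$ be such that every unitary representation of $G$ admitting a $(Q,\varepsilon_0)$-invariant vector has a non-zero finite dimensional subrepresentation, and suppose that $Q_n$ is not a Kazhdan set in $G$ for any $n\ge1$. Then for every sequence $(\varepsilon_n)_{n\ge1}$ of positive numbers decreasing to $0$ with $\varepsilon_1\le\varepsilon_0$, there exist finite dimensional Hilbert spaces $H_n$ and unitary representations $\pi_n$ of $G$ on $H_n$ ($n\ge1$) such that, for every $n\ge1$, $\pi_n$ has no non-zero $G$-invariant vector and there exists $a_n\in H_n$ with $\|a_n\|=1$ and $\sup_{g\in Q_n}\|\pi_n(g)a_n-a_n\|<\varepsilon_n$.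
   Context: All Hilbert spaces are complex; unitary representations are strongly continuous. For $Q\subseteq G$ and $\varepsilon>0$, a vector $x$ is $(Q,\varepsilon)$-invariant for $\pi$ if $\sup_{g\in Q}\|\pi(g)x-x\|<\varepsilon\|x\|$. A subset $Q$ is a Kazhdan set in $G$ if there exists $\varepsilon>0$ such that every unitary representation of $G$ having a $(Q,\varepsilon)$-invariant vector has a non-zero $G$-invariant vector. *)

(* Defs.v *)
From Stdlib Require Import Reals.
Open Scope R_scope.

Record C := mkC { Cre : R ; Cim : R }.
Definition C0 : C := mkC 0 0.
Definition C1 : C := mkC 1 0.
Definition Cadd (a b : C) : C := mkC (Cre a + Cre b) (Cim a + Cim b).
Definition Cmul (a b : C) : C :=
  mkC (Cre a * Cre b - Cim a * Cim b) (Cre a * Cim b + Cim a * Cre b).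
Definition Cconj (a : C) : C := mkC (Cre a) (- Cim a).

(* inner product: linear in the first variable, conjugate-linear in the
   second; completeness w.r.t. the induced norm. *)
Record HilbertSpace := {
  hv :> Type;
  hzero : hv;
  hadd : hv -> hv -> hv;
  hopp : hv -> hv;
  hscal : C -> hv -> hv;
  hinner : hv -> hv -> C;
  hadd_assoc : forall x y z, hadd x (hadd y z) = hadd (hadd x y) z;
  hadd_comm : forall x y, hadd x y = hadd y x;
  hadd_zero : forall x, hadd hzero x = x;
  hadd_opp : forall x, hadd (hopp x) x = hzero;
  hscal_one : forall x, hscal C1 x = x;
  hscal_mul : forall a b x, hscal a (hscal b x) = hscal (Cmul a b) x;
  hscal_addv : forall a x y, hscal a (hadd x y) = hadd (hscal a x) (hscal a y);
  hscal_adds : forall a b x, hscal (Cadd a b) x = hadd (hscal a x) (hscal b x);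
  hinner_add : forall x y z, hinner (hadd x y) z = Cadd (hinner x z) (hinner y z);
  hinner_scal : forall a x y, hinner (hscal a x) y = Cmul a (hinner x y);
  hinner_conj : forall x y, hinner y x = Cconj (hinner x y);
  hinner_pos : forall x, 0 <= Cre (hinner x x);
  hinner_def : forall x, hinner x x = C0 -> x = hzero;
  hcomplete : forall u : nat -> hv,
    (forall eps, eps > 0 -> exists N, forall n m, (n >= N)%nat -> (m >= N)%nat ->
        sqrt (Cre (hinner (hadd (u n) (hopp (u m))) (hadd (u n) (hopp (u m))))) < eps) ->
    exists l, forall eps, eps > 0 -> exists N, forall n, (n >= N)%nat ->
        sqrt (Cre (hinner (hadd (u n) (hopp l)) (hadd (u n) (hopp l)))) < eps
}.

Arguments hzero {h}.
Arguments hadd {h}.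
Arguments hopp {h}.
Arguments hscal {h}.
Arguments hinner {h}.

Definition hnorm {H : HilbertSpace} (x : H) : R := sqrt (Cre (hinner x x)).
Definition hsub {H : HilbertSpace} (x y : H) : H := hadd x (hopp y).

Fixpoint in_span {H : HilbertSpace} (l : list H) (x : H) : Prop :=
  match l with
  | nil => x = hzero
  | cons v l' => exists (a : C) (y : H), in_span l' y /\ x = hadd (hscal a v) y
  end.

Definition finite_dimensional (H : HilbertSpace) : Prop :=
  exists l : list H, forall x : H, in_span l x.

Record TopGroup := {
  tg :> Type;
  tmul : tg -> tg -> tg;
  tone : tg;
  tinv : tg -> tg;
  tmul_assoc : forall x y z, tmul x (tmul y z) = tmul (tmul x y) z;
  tmul_one_l : forall x, tmul tone x = x;
  tmul_one_r : forall x, tmul x tone = x;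
  tmul_inv_l : forall x, tmul (tinv x) x = tone;
  tmul_inv_r : forall x, tmul x (tinv x) = tone;
  topen : (tg -> Prop) -> Prop;
  topen_full : topen (fun _ => True);
  topen_inter : forall U V, topen U -> topen V -> topen (fun x => U x /\ V x);
  topen_union : forall (I : Type) (U : I -> tg -> Prop),
      (forall i, topen (U i)) -> topen (fun x => exists i, U i x);
  tmul_cont : forall (U : tg -> Prop) x y, topen U -> U (tmul x y) ->
      exists A B, topen A /\ topen B /\ A x /\ B y /\
        (forall a b, A a -> B b -> U (tmul a b));
  tinv_cont : forall U, topen U -> topen (fun x => U (tinv x))
}.

Arguments tmul {t}.
Arguments tone {t}.
Arguments tinv {t}.
Arguments topen {t}.

Record URep (G : TopGroup) (H : HilbertSpace) := {
  rep :> G -> H -> H;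
  rep_add : forall g x y, rep g (hadd x y) = hadd (rep g x) (rep g y);
  rep_scal : forall g a x, rep g (hscal a x) = hscal a (rep g x);
  rep_inner : forall g x y, hinner (rep g x) (rep g y) = hinner x y;
  rep_one : forall x, rep tone x = x;
  rep_mul : forall g h x, rep (tmul g h) x = rep g (rep h x);
  rep_strong_cont : forall (x : H) (g0 : G) eps, eps > 0 ->
      exists U, topen U /\ U g0 /\
        forall g, U g -> hnorm (hsub (rep g x) (rep g0 x)) < eps
}.

Arguments rep {G H}.

(* x is (Q,eps)-invariant: sup_{g in Q} ||pi(g)x - x|| < eps ||x||, where the
   supremum (taken in [0,+oo), i.e. sup of the empty set is 0) is strictly
   below eps ||x||. *)
Definition almost_invariant {G : TopGroup} {H : HilbertSpace} (pi : URep G H)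
    (Q : G -> Prop) (eps : R) (x : H) : Prop :=
  exists delta, 0 <= delta /\ delta < eps * hnorm x /\
    forall g, Q g -> hnorm (hsub (pi g x) x) <= delta.

Definition invariant_vector {G : TopGroup} {H : HilbertSpace} (pi : URep G H)
    (x : H) : Prop :=
  forall g, pi g x = x.

Definition has_nonzero_invariant {G : TopGroup} {H : HilbertSpace}
    (pi : URep G H) : Prop :=
  exists x : H, x <> hzero /\ invariant_vector pi x.

Definition Kazhdan_set (G : TopGroup) (Q : G -> Prop) : Prop :=
  exists eps, eps > 0 /\
    forall (H : HilbertSpace) (pi : URep G H),
      (exists x, almost_invariant pi Q eps x) -> has_nonzero_invariant pi.

(* a non-zero finite dimensional subrepresentation: a pi(G)-invariant linear
   subspace S, spanned by a finite list of its vectors, containing a non-zero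
   vector (finite dimensional subspaces are automatically closed). *)
Definition has_nonzero_fd_subrep {G : TopGroup} {H : HilbertSpace}
    (pi : URep G H) : Prop :=
  exists S : H -> Prop,
    S hzero /\
    (forall x y, S x -> S y -> S (hadd x y)) /\
    (forall a x, S x -> S (hscal a x)) /\
    (forall g x, S x -> S (pi g x)) /\
    (exists l : list H, (forall v, List.In v l -> S v) /\
                        (forall x, S x -> in_span l x)) /\
    (exists x, S x /\ x <> hzero).

(* Main.v *)
Require Import Defs.
From Stdlib Require Import Reals Lra Lia List ClassicalEpsilon ProofIrrelevance Classical.
Import Defs.
Open Scope R_scope.

Arguments hadd_assoc {h}. Arguments hadd_comm {h}. Arguments hadd_zero {h}.
Arguments hadd_opp {h}. Arguments hscal_one {h}. Arguments hscal_mul {h}.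
Arguments hscal_addv {h}. Arguments hscal_adds {h}. Arguments hinner_add {h}.
Arguments hinner_scal {h}. Arguments hinner_conj {h}. Arguments hinner_pos {h}.
Arguments hinner_def {h}.
Arguments rep_add {G H}. Arguments rep_scal {G H}. Arguments rep_inner {G H}.
Arguments rep_one {G H}. Arguments rep_mul {G H}. Arguments rep_strong_cont {G H}.
Arguments tmul_inv_r {t}. Arguments tmul_inv_l {t}.

Lemma C_ext (a b : C) : Cre a = Cre b -> Cim a = Cim b -> a = b.
Proof. destruct a, b; simpl; intros; subst; reflexivity. Qed.

Lemma C0_parts (a : C) : a = C0 -> Cre a = 0 /\ Cim a = 0.
Proof. intros ->; simpl; lra. Qed.

Lemma hadd_zero_r {H : HilbertSpace} (x : H) : hadd x hzero = x.
Proof. rewrite hadd_comm; apply hadd_zero. Qed.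

Lemma hadd_opp_r {H : HilbertSpace} (x : H) : hadd x (hopp x) = hzero.
Proof. rewrite hadd_comm; apply hadd_opp. Qed.

Lemma hadd_cancel_l {H : HilbertSpace} (a x y : H) : hadd a x = hadd a y -> x = y.
Proof.
  intros E. rewrite <- (hadd_zero x), <- (hadd_zero y), <- (hadd_opp a).
  rewrite <- !hadd_assoc, E. reflexivity.
Qed.

Lemma hscal_zero_s {H : HilbertSpace} (x : H) : hscal C0 x = hzero.
Proof.
  apply (hadd_cancel_l (hscal C0 x)). rewrite hadd_zero_r, <- hscal_adds.
  f_equal. apply C_ext; simpl; lra.
Qed.

Lemma hscal_zero_v {H : HilbertSpace} (a : C) : hscal a (@hzero H) = hzero.
Proof.
  rewrite <- (hscal_zero_s hzero) at 1. rewrite hscal_mul.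
  replace (Cmul a C0) with C0 by (apply C_ext; simpl; lra). apply hscal_zero_s.
Qed.

Lemma hopp_scal {H : HilbertSpace} (x : H) : hopp x = hscal (mkC (-1) 0) x.
Proof.
  apply (hadd_cancel_l x). rewrite hadd_opp_r.
  rewrite <- (hscal_one x) at 1. rewrite <- hscal_adds.
  replace (Cadd C1 (mkC (-1) 0)) with C0 by (apply C_ext; simpl; lra).
  symmetry; apply hscal_zero_s.
Qed.

Lemma hinner_add_r {H : HilbertSpace} (x y z : H) :
  hinner x (hadd y z) = Cadd (hinner x y) (hinner x z).
Proof.
  rewrite hinner_conj, hinner_add, (hinner_conj x y), (hinner_conj x z).
  apply C_ext; simpl; lra.
Qed.

Lemma hinner_scal_r {H : HilbertSpace} (a : C) (x y : H) :
  hinner x (hscal a y) = Cmul (Cconj a) (hinner x y).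
Proof.
  rewrite hinner_conj, hinner_scal, (hinner_conj x y).
  apply C_ext; simpl; ring.
Qed.

Lemma hinner_zero_l {H : HilbertSpace} (y : H) : hinner hzero y = C0.
Proof.
  rewrite <- (hscal_zero_s y), hinner_scal. apply C_ext; simpl; ring.
Qed.

Lemma hinner_zero_r {H : HilbertSpace} (y : H) : hinner y hzero = C0.
Proof.
  rewrite hinner_conj, hinner_zero_l. apply C_ext; simpl; ring.
Qed.

Lemma hinner_self_im {H : HilbertSpace} (x : H) : Cim (hinner x x) = 0.
Proof.
  pose proof (hinner_conj x x) as E. apply (f_equal Cim) in E. simpl in E. lra.
Qed.

Ltac hexpand :=
  unfold hsub in *; rewrite ?hopp_scal in *;
  repeat (rewrite ?hinner_add, ?hinner_add_r, ?hinner_scal, ?hinner_scal_r,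
                  ?hinner_zero_l, ?hinner_zero_r in * ).

Lemma hsub_zero_eq {H : HilbertSpace} (u v : H) : hsub u v = hzero -> u = v.
Proof.
  unfold hsub; intros E.
  rewrite <- (hadd_zero_r u), <- (hadd_opp v), hadd_assoc, E, hadd_zero. reflexivity.
Qed.

Ltac veq := apply hsub_zero_eq; apply hinner_def; hexpand; apply C_ext; simpl; ring.

Lemma test_veq {H : HilbertSpace} (x p c w : H) (a : C) :
  hsub x (hadd p (hscal a w)) = hsub (hsub x p) (hscal a w).
Proof. veq. Qed.
Lemma hnorm_pos {H : HilbertSpace} (x : H) : 0 <= hnorm x.
Proof. unfold hnorm; apply sqrt_pos. Qed.

Lemma hnorm_sq {H : HilbertSpace} (x : H) : hnorm x * hnorm x = Cre (hinner x x).
Proof. unfold hnorm; apply sqrt_sqrt, hinner_pos. Qed.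

Lemma hinner_self_zero {H : HilbertSpace} (x : H) : Cre (hinner x x) = 0 -> x = hzero.
Proof.
  intros E; apply hinner_def; apply C_ext; [exact E | apply hinner_self_im].
Qed.

Lemma hnorm_zero {H : HilbertSpace} (x : H) : hnorm x = 0 -> x = hzero.
Proof.
  intros E; apply hinner_self_zero. rewrite <- hnorm_sq, E; ring.
Qed.

Lemma hnorm_le_sq {H : HilbertSpace} (x y : H) :
  Cre (hinner x x) <= Cre (hinner y y) -> hnorm x <= hnorm y.
Proof. intros; unfold hnorm; apply sqrt_le_1_alt; auto. Qed.

Lemma hnorm_eq_sq {H : HilbertSpace} (x y : H) :
  Cre (hinner x x) = Cre (hinner y y) -> hnorm x = hnorm y.
Proof. intros E; unfold hnorm; rewrite E; auto. Qed.

Lemma cs_expand {H : HilbertSpace} (t v : H) (r : R) :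
  Cre (hinner v v) = r -> r <> 0 ->
  Cre (hinner (hsub t (hscal (mkC (Cre (hinner t v) / r) (Cim (hinner t v) / r)) v))
              (hsub t (hscal (mkC (Cre (hinner t v) / r) (Cim (hinner t v) / r)) v)))
  = Cre (hinner t t) - (Cre (hinner t v) ^ 2 + Cim (hinner t v) ^ 2) / r.
Proof.
  intros Er Hr.
  pose proof (hinner_self_im v) as Ei.
  pose proof (hinner_conj t v) as Ec.
  set (a := Cre (hinner t v)). set (b := Cim (hinner t v)).
  hexpand. rewrite Ec. simpl. rewrite Er, Ei. fold a b. field. auto.
Qed.

Lemma cs_orth_step {H : HilbertSpace} (t v : H) (r : R) :
  Cre (hinner v v) = r -> r <> 0 ->
  hinner (hsub t (hscal (mkC (Cre (hinner t v) / r) (Cim (hinner t v) / r)) v)) v = C0.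
Proof.
  intros Er Hr.
  pose proof (hinner_self_im v) as Ei.
  set (a := Cre (hinner t v)). set (b := Cim (hinner t v)).
  hexpand. apply C_ext; simpl; rewrite Er, Ei; fold a b; field; auto.
Qed.

Lemma cauchy_schwarz {H : HilbertSpace} (x y : H) :
  Cre (hinner x y) ^ 2 + Cim (hinner x y) ^ 2 <= Cre (hinner x x) * Cre (hinner y y).
Proof.
  destruct (Req_dec (Cre (hinner y y)) 0) as [E|E].
  - apply hinner_self_zero in E. subst y. rewrite !hinner_zero_r. simpl.
    pose proof (hinner_pos x). nra.
  - pose proof (cs_expand x y _ eq_refl E) as X.
    pose proof (hinner_pos (hsub x (hscal (mkC (Cre (hinner x y) / Cre (hinner y y))
                 (Cim (hinner x y) / Cre (hinner y y))) y))) as P.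
    rewrite X in P. pose proof (hinner_pos y) as Py.
    assert (Py' : 0 < Cre (hinner y y)) by lra.
    apply Rmult_le_compat_r with (r := Cre (hinner y y)) in P; [|lra].
    unfold Rdiv in P. rewrite Rmult_minus_distr_r, Rmult_assoc, Rinv_l in P by lra.
    lra.
Qed.

Lemma re_le_norms {H : HilbertSpace} (x y : H) :
  Rabs (Cre (hinner x y)) <= hnorm x * hnorm y.
Proof.
  pose proof (cauchy_schwarz x y). rewrite <- (hnorm_sq x), <- (hnorm_sq y) in H0.
  pose proof (hnorm_pos x); pose proof (hnorm_pos y).
  rewrite <- (Rabs_pos_eq (hnorm x * hnorm y)) by nra.
  apply Rsqr_le_abs_0. unfold Rsqr.
  pose proof (pow2_ge_0 (Cim (hinner x y))); pose proof (pow2_ge_0 (Cre (hinner x y))); nra.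
Qed.

Lemma im_le_norms {H : HilbertSpace} (x y : H) :
  Rabs (Cim (hinner x y)) <= hnorm x * hnorm y.
Proof.
  pose proof (cauchy_schwarz x y). rewrite <- (hnorm_sq x), <- (hnorm_sq y) in H0.
  pose proof (hnorm_pos x); pose proof (hnorm_pos y).
  rewrite <- (Rabs_pos_eq (hnorm x * hnorm y)) by nra.
  apply Rsqr_le_abs_0. unfold Rsqr.
  pose proof (pow2_ge_0 (Cim (hinner x y))); pose proof (pow2_ge_0 (Cre (hinner x y))); nra.
Qed.

Lemma hnorm_triangle {H : HilbertSpace} (x y : H) :
  hnorm (hadd x y) <= hnorm x + hnorm y.
Proof.
  assert (E : Cre (hinner (hadd x y) (hadd x y)) =
              Cre (hinner x x) + Cre (hinner y y) + 2 * Cre (hinner x y)).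
  { pose proof (hinner_conj x y) as Ec. hexpand. rewrite Ec. simpl. ring. }
  pose proof (re_le_norms x y). pose proof (hnorm_pos x); pose proof (hnorm_pos y).
  pose proof (hnorm_pos (hadd x y)).
  apply Rsqr_incr_0_var; [|lra]. unfold Rsqr.
  rewrite hnorm_sq, E, <- hnorm_sq, <- (hnorm_sq y).
  pose proof (Rle_abs (Cre (hinner x y))). nra.
Qed.

Lemma hnorm_scal_real {H : HilbertSpace} (r : R) (x : H) :
  hnorm (hscal (mkC r 0) x) = Rabs r * hnorm x.
Proof.
  pose proof (hnorm_pos x). pose proof (Rabs_pos r).
  apply Rsqr_inj; [apply hnorm_pos | nra |]. unfold Rsqr.
  rewrite hnorm_sq. hexpand. simpl. pose proof (hinner_self_im x) as Ei. rewrite Ei.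
  replace (Rabs r * hnorm x * (Rabs r * hnorm x)) with ((Rabs r * Rabs r) * (hnorm x * hnorm x)) by ring.
  rewrite <- Rabs_mult, Rabs_pos_eq by nra. rewrite hnorm_sq. ring.
Qed.

Lemma hnorm_hsub_sym {H : HilbertSpace} (x y : H) : hnorm (hsub x y) = hnorm (hsub y x).
Proof. apply hnorm_eq_sq. hexpand. simpl. ring. Qed.

Lemma hnorm_sub_triangle {H : HilbertSpace} (x y z : H) :
  hnorm (hsub x z) <= hnorm (hsub x y) + hnorm (hsub y z).
Proof.
  replace (hsub x z) with (hadd (hsub x y) (hsub y z)) by veq. apply hnorm_triangle.
Qed.
Lemma span_zero {H : HilbertSpace} (l : list H) : in_span l hzero.
Proof.
  induction l; simpl; auto. exists C0, hzero. split; auto.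
  rewrite hscal_zero_s, hadd_zero. reflexivity.
Qed.

Lemma span_add {H : HilbertSpace} (l : list H) x y :
  in_span l x -> in_span l y -> in_span l (hadd x y).
Proof.
  revert x y; induction l as [|v l IH]; simpl; intros x y Hx Hy.
  - subst; apply hadd_zero.
  - destruct Hx as [a [x' [Hx' ->]]]. destruct Hy as [b [y' [Hy' ->]]].
    exists (Cadd a b), (hadd x' y'). split; [apply IH; auto|]. veq.
Qed.

Lemma span_scal {H : HilbertSpace} (l : list H) a x :
  in_span l x -> in_span l (hscal a x).
Proof.
  revert x; induction l as [|v l IH]; simpl; intros x Hx.
  - subst; apply hscal_zero_v.
  - destruct Hx as [b [x' [Hx' ->]]].
    exists (Cmul a b), (hscal a x'). split; [apply IH; auto|]. veq.
Qed.

Lemma span_sub {H : HilbertSpace} (l : list H) x y :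
  in_span l x -> in_span l y -> in_span l (hsub x y).
Proof.
  intros; unfold hsub; rewrite hopp_scal; apply span_add; auto; apply span_scal; auto.
Qed.

Lemma span_elem {H : HilbertSpace} (l : list H) v : In v l -> in_span l v.
Proof.
  induction l as [|w l IH]; simpl; [tauto|]. intros [->|Hin].
  - exists C1, hzero. split; [apply span_zero|]. rewrite hscal_one, hadd_zero_r; auto.
  - exists C0, v. split; auto. rewrite hscal_zero_s, hadd_zero; auto.
Qed.

Definition orth_list {H : HilbertSpace} (y : H) (l : list H) :=
  forall v, In v l -> hinner y v = C0.

Lemma span_orth {H : HilbertSpace} (l : list H) y u :
  orth_list y l -> in_span l u -> hinner y u = C0.
Proof.
  revert u; induction l as [|v l IH]; simpl; intros u Ho Hu.
  - subst; apply hinner_zero_r.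
  - destruct Hu as [a [u' [Hu' ->]]].
    rewrite hinner_add_r, hinner_scal_r, (Ho v (or_introl eq_refl)), IH.
    + apply C_ext; simpl; ring.
    + intros w Hw; apply Ho; right; auto.
    + auto.
Qed.

Lemma span_orth_l {H : HilbertSpace} (l : list H) y u :
  orth_list y l -> in_span l u -> hinner u y = C0.
Proof.
  intros; rewrite hinner_conj, (span_orth l y u); auto. apply C_ext; simpl; ring.
Qed.

Lemma span_app {H : HilbertSpace} (l1 l2 : list H) u :
  in_span (l1 ++ l2) u <-> exists a b, in_span l1 a /\ in_span l2 b /\ u = hadd a b.
Proof.
  revert u; induction l1 as [|v l1 IH]; simpl; intros u; split.
  - intros Hu; exists hzero, u; repeat split; auto. rewrite hadd_zero; auto.
  - intros [a [b [-> [Hb ->]]]]. rewrite hadd_zero; auto.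
  - intros [c [y [Hy ->]]]. apply IH in Hy. destruct Hy as [a [b [Ha [Hb ->]]]].
    exists (hadd (hscal c v) a), b. repeat split; auto.
    + exists c, a; auto.
    + apply hadd_assoc.
  - intros [a [b [[c [y [Hy ->]]] [Hb ->]]]].
    exists c, (hadd y b). split.
    + apply IH. exists y, b; auto.
    + symmetry; apply hadd_assoc.
Qed.

Lemma span_app_l {H : HilbertSpace} (l1 l2 : list H) u :
  in_span l1 u -> in_span (l1 ++ l2) u.
Proof.
  intros; apply span_app; exists u, hzero; repeat split; auto using span_zero.
  rewrite hadd_zero_r; auto.
Qed.

Lemma span_app_r {H : HilbertSpace} (l1 l2 : list H) u :
  in_span l2 u -> in_span (l1 ++ l2) u.
Proof.
  intros; apply span_app; exists hzero, u; repeat split; auto using span_zero.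
  rewrite hadd_zero; auto.
Qed.

Lemma proj_exists {H : HilbertSpace} (l : list H) (x : H) :
  exists p, in_span l p /\ orth_list (hsub x p) l.
Proof.
  revert x; induction l as [|v l IH]; intros x.
  - exists hzero; split; simpl; auto. intros w [].
  - destruct (IH x) as [p [Hp Hpo]]. destruct (IH v) as [q [Hq Hqo]].
    set (w := hsub v q).
    assert (Hwo : orth_list w l) by exact Hqo.
    assert (Hv : v = hadd w q) by (unfold w; veq).
    destruct (Req_dec (Cre (hinner w w)) 0) as [E|E].
    + apply hinner_self_zero in E.
      exists p; split.
      * simpl. exists C0, p. split; auto. rewrite hscal_zero_s, hadd_zero; auto.
      * intros u [<-|Hu]; auto.
        rewrite Hv, E, hadd_zero. apply (span_orth l); auto.
    + set (z := hsub x p).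
      set (c := mkC (Cre (hinner z w) / Cre (hinner w w)) (Cim (hinner z w) / Cre (hinner w w))).
      exists (hadd p (hscal c w)). split.
      * simpl. exists c, (hsub p (hscal c q)). split.
        -- apply span_sub; auto. apply span_scal; auto.
        -- unfold w; veq.
      * assert (Ez : hsub x (hadd p (hscal c w)) = hsub z (hscal c w)) by (unfold z; veq).
        rewrite Ez.
        assert (O1 : hinner (hsub z (hscal c w)) w = C0) by (apply cs_orth_step; auto).
        assert (O2 : orth_list (hsub z (hscal c w)) l).
        { intros u Hu. specialize (Hpo u Hu). specialize (Hwo u Hu). fold z in Hpo.
          unfold hsub at 1. rewrite hopp_scal, hinner_add, hinner_scal, hinner_scal, Hwo.
          unfold hsub in Hpo. rewrite Hpo. apply C_ext; simpl; ring. }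
        intros u [<-|Hu]; auto.
        rewrite Hv, hinner_add_r, O1, (span_orth l _ q); auto. apply C_ext; simpl; ring.
Qed.

Definition proj {H : HilbertSpace} (l : list H) (x : H) : H :=
  proj1_sig (constructive_indefinite_description _ (proj_exists l x)).

Lemma proj_span {H : HilbertSpace} (l : list H) x : in_span l (proj l x).
Proof. unfold proj; destruct (constructive_indefinite_description _ _) as [p Hp]; simpl; tauto. Qed.

Lemma proj_orth {H : HilbertSpace} (l : list H) x : orth_list (hsub x (proj l x)) l.
Proof. unfold proj; destruct (constructive_indefinite_description _ _) as [p Hp]; simpl; tauto. Qed.

Lemma orth_self_zero {H : HilbertSpace} (l : list H) y :
  in_span l y -> orth_list y l -> y = hzero.
Proof. intros Hs Ho; apply hinner_def; apply (span_orth l); auto. Qed.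

Lemma orth_list_sub {H : HilbertSpace} (l : list H) a b :
  orth_list a l -> orth_list b l -> orth_list (hsub a b) l.
Proof.
  intros Ha Hb u Hu. specialize (Ha u Hu); specialize (Hb u Hu).
  unfold hsub; rewrite hopp_scal, hinner_add, hinner_scal, Ha, Hb. apply C_ext; simpl; ring.
Qed.

Lemma proj_unique {H : HilbertSpace} (l : list H) x p :
  in_span l p -> orth_list (hsub x p) l -> p = proj l x.
Proof.
  intros Hp Ho. apply hsub_zero_eq. apply (orth_self_zero l).
  - apply span_sub; auto; apply proj_span.
  - replace (hsub p (proj l x)) with (hsub (hsub x (proj l x)) (hsub x p)) by veq.
    apply orth_list_sub; auto; apply proj_orth.
Qed.

Lemma pythagoras {H : HilbertSpace} (l : list H) u y :
  in_span l u -> orth_list y l ->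
  Cre (hinner (hadd u y) (hadd u y)) = Cre (hinner u u) + Cre (hinner y y).
Proof.
  intros Hu Hy. pose proof (span_orth l y u Hy Hu) as E1.
  pose proof (span_orth_l l y u Hy Hu) as E2.
  rewrite !hinner_add, !hinner_add_r, E1, E2. simpl. ring.
Qed.

Lemma best_approx {H : HilbertSpace} (l : list H) x w :
  in_span l w -> hnorm (hsub x (proj l x)) <= hnorm (hsub x w).
Proof.
  intros Hw. apply hnorm_le_sq.
  replace (hsub x w) with (hadd (hsub (proj l x) w) (hsub x (proj l x))) by veq.
  rewrite (pythagoras l).
  - pose proof (hinner_pos (hsub (proj l x) w)); lra.
  - apply span_sub; auto; apply proj_span.
  - apply proj_orth.
Qed.

Lemma proj_sub {H : HilbertSpace} (l : list H) a b :
  proj l (hsub a b) = hsub (proj l a) (proj l b).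
Proof.
  symmetry; apply proj_unique.
  - apply span_sub; apply proj_span.
  - replace (hsub (hsub a b) (hsub (proj l a) (proj l b)))
      with (hsub (hsub a (proj l a)) (hsub b (proj l b))) by veq.
    apply orth_list_sub; apply proj_orth.
Qed.

Lemma proj_pyth {H : HilbertSpace} (l : list H) y :
  Cre (hinner y y) = Cre (hinner (proj l y) (proj l y)) +
                     Cre (hinner (hsub y (proj l y)) (hsub y (proj l y))).
Proof.
  rewrite <- (pythagoras l); [| apply proj_span | apply proj_orth].
  f_equal; f_equal; veq.
Qed.

Lemma proj_contr {H : HilbertSpace} (l : list H) y :
  hnorm (proj l y) <= hnorm y.
Proof.
  apply hnorm_le_sq. rewrite (proj_pyth l y).
  pose proof (hinner_pos (hsub y (proj l y))); lra.
Qed.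

Lemma coproj_contr {H : HilbertSpace} (l : list H) y :
  hnorm (hsub y (proj l y)) <= hnorm y.
Proof.
  apply hnorm_le_sq. rewrite (proj_pyth l y).
  pose proof (hinner_pos (proj l y)); lra.
Qed.
Lemma rep_zero {G : TopGroup} {H : HilbertSpace} (pi : URep G H) g : pi g hzero = hzero.
Proof.
  rewrite <- (hscal_zero_s hzero), rep_scal, !hscal_zero_s. reflexivity.
Qed.

Lemma rep_sub {G : TopGroup} {H : HilbertSpace} (pi : URep G H) g a b :
  pi g (hsub a b) = hsub (pi g a) (pi g b).
Proof. unfold hsub; rewrite !hopp_scal, rep_add, rep_scal; auto. Qed.

Lemma rep_norm {G : TopGroup} {H : HilbertSpace} (pi : URep G H) g x :
  hnorm (pi g x) = hnorm x.
Proof. unfold hnorm; rewrite rep_inner; auto. Qed.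

Lemma rep_adj {G : TopGroup} {H : HilbertSpace} (pi : URep G H) g y v :
  hinner (pi g y) v = hinner y (pi (tinv g) v).
Proof.
  assert (E : v = pi g (pi (tinv g) v)) by (rewrite <- rep_mul, tmul_inv_r, rep_one; auto).
  rewrite E at 1. apply rep_inner.
Qed.

Definition inv_list {G : TopGroup} {H : HilbertSpace} (pi : URep G H) (l : list H) :=
  forall g v, in_span l v -> in_span l (pi g v).

Lemma inv_orth {G : TopGroup} {H : HilbertSpace} (pi : URep G H) l y g :
  inv_list pi l -> orth_list y l -> orth_list (pi g y) l.
Proof.
  intros Hi Ho v Hv. rewrite rep_adj. apply (span_orth l); auto.
  apply Hi, span_elem; auto.
Qed.

Lemma proj_comm {G : TopGroup} {H : HilbertSpace} (pi : URep G H) l g x :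
  inv_list pi l -> proj l (pi g x) = pi g (proj l x).
Proof.
  intros Hi. symmetry. apply proj_unique.
  - apply Hi, proj_span.
  - rewrite <- rep_sub. apply inv_orth; auto. apply proj_orth.
Qed.

Lemma inv_app {G : TopGroup} {H : HilbertSpace} (pi : URep G H) l1 l2 :
  inv_list pi l1 -> inv_list pi l2 -> inv_list pi (l1 ++ l2).
Proof.
  intros H1 H2 g v Hv. apply span_app in Hv. destruct Hv as [a [b [Ha [Hb ->]]]].
  rewrite rep_add. apply span_app. exists (pi g a), (pi g b); auto.
Qed.

Lemma inv_nil {G : TopGroup} {H : HilbertSpace} (pi : URep G H) : inv_list pi nil.
Proof. intros g v Hv; simpl in *; subst; apply rep_zero. Qed.

Record csub {H : HilbertSpace} (P : H -> Prop) := {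
  cs0 : P hzero;
  csadd : forall x y, P x -> P y -> P (hadd x y);
  csscal : forall a x, P x -> P (hscal a x);
  cslim : forall (u : nat -> H) l, (forall n, P (u n)) ->
    (forall eps, eps > 0 -> exists N, forall n, (n >= N)%nat -> hnorm (hsub (u n) l) < eps) ->
    P l
}.

Lemma sig_eq {A : Type} {P : A -> Prop} (a b : sig P) : proj1_sig a = proj1_sig b -> a = b.
Proof. destruct a, b; simpl; intros; subst; f_equal; apply proof_irrelevance. Qed.

Lemma csopp {H : HilbertSpace} {P : H -> Prop} (c : csub P) x : P x -> P (hopp x).
Proof. intros; rewrite hopp_scal; apply (csscal _ c); auto. Qed.

Definition subH {H : HilbertSpace} (P : H -> Prop) (c : csub P) : HilbertSpace.
Proof.
  refine (@Build_HilbertSpace (sig P) (exist P hzero (cs0 _ c))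
    (fun a b => exist P (hadd (proj1_sig a) (proj1_sig b))
                  (csadd _ c _ _ (proj2_sig a) (proj2_sig b)))
    (fun a => exist P (hopp (proj1_sig a)) (csopp c _ (proj2_sig a)))
    (fun k a => exist P (hscal k (proj1_sig a)) (csscal _ c k _ (proj2_sig a)))
    (fun a b => hinner (proj1_sig a) (proj1_sig b)) _ _ _ _ _ _ _ _ _ _ _ _ _ _).
  all: try (intros; apply sig_eq; simpl;
            first [apply hadd_assoc | apply hadd_comm | apply hadd_zero | apply hadd_opp
                  | apply hscal_one | apply hscal_mul | apply hscal_addv | apply hscal_adds]).
  - intros; simpl; apply hinner_add.
  - intros; simpl; apply hinner_scal.
  - intros; simpl; apply hinner_conj.
  - intros; simpl; apply hinner_pos.
  - intros x E; apply sig_eq; simpl; apply hinner_def; exact E.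
  - intros u Hc. destruct (hcomplete H (fun n => proj1_sig (u n)) Hc) as [l Hl].
    assert (Pl : P l).
    { apply (cslim _ c (fun n => proj1_sig (u n))); [intros n; apply proj2_sig | exact Hl]. }
    exists (exist P l Pl). exact Hl.
Defined.

Definition subRep {G : TopGroup} {H : HilbertSpace} (P : H -> Prop) (c : csub P)
  (pi : URep G H) (Hinv : forall g x, P x -> P (pi g x)) : URep G (subH P c).
Proof.
  refine (@Build_URep G (subH P c)
    (fun g a => exist P (pi g (proj1_sig a)) (Hinv g _ (proj2_sig a))) _ _ _ _ _ _).
  - intros; apply sig_eq; simpl; apply rep_add.
  - intros; apply sig_eq; simpl; apply rep_scal.
  - intros; simpl; apply rep_inner.
  - intros; apply sig_eq; simpl; apply rep_one.
  - intros; apply sig_eq; simpl; apply rep_mul.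
  - intros x g0 eps He. exact (rep_strong_cont pi (proj1_sig x) g0 eps He).
Defined.
Lemma small_zero (r : R) : 0 <= r -> (forall eps, eps > 0 -> r < eps) -> r = 0.
Proof.
  intros H0 H1. destruct (Req_dec r 0); auto. specialize (H1 r). lra.
Qed.

Lemma abs_small_zero (r : R) : (forall eps, eps > 0 -> Rabs r < eps) -> r = 0.
Proof.
  intros H1. destruct (Req_dec r 0); auto. pose proof (Rabs_pos_lt r H).
  specialize (H1 (Rabs r) H0). lra.
Qed.

Lemma span_csub {H : HilbertSpace} (L : list H) : csub (in_span L).
Proof.
  constructor.
  - apply span_zero.
  - apply span_add.
  - apply span_scal.
  - intros u l Hu Hl.
    assert (E : l = proj L l).
    { apply hsub_zero_eq, hnorm_zero, small_zero; [apply hnorm_pos|].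
      intros eps He. destruct (Hl eps He) as [N HN]. specialize (HN N (le_n N)).
      eapply Rle_lt_trans; [apply (best_approx L l (u N)); auto|].
      rewrite hnorm_hsub_sym; auto. }
    rewrite E; apply proj_span.
Qed.

Definition Kp {G : TopGroup} {H : HilbertSpace} (pi : URep G H) (y : H) : Prop :=
  forall L, inv_list pi L -> forall v, in_span L v -> hinner y v = C0.

Lemma K_csub {G : TopGroup} {H : HilbertSpace} (pi : URep G H) : csub (Kp pi).
Proof.
  constructor.
  - intros L _ v _; apply hinner_zero_l.
  - intros x y Hx Hy L HL v Hv. rewrite hinner_add, (Hx L HL v Hv), (Hy L HL v Hv).
    apply C_ext; simpl; ring.
  - intros a x Hx L HL v Hv. rewrite hinner_scal, (Hx L HL v Hv). apply C_ext; simpl; ring.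
  - intros u l Hu Hl L HL v Hv.
    assert (key : forall n, hinner l v = hinner (hsub l (u n)) v).
    { intros n. pose proof (Hu n L HL v Hv) as E. hexpand. rewrite E. apply C_ext; simpl; ring. }
    assert (B : forall eps, eps > 0 -> Rabs (Cre (hinner l v)) < eps /\ Rabs (Cim (hinner l v)) < eps).
    { intros eps He.
      pose proof (hnorm_pos v) as Hv0.
      destruct (Hl (eps / (hnorm v + 1))) as [N HN].
      { apply Rdiv_lt_0_compat; lra. }
      specialize (HN N (le_n N)). rewrite (key N).
      pose proof (re_le_norms (hsub l (u N)) v). pose proof (im_le_norms (hsub l (u N)) v).
      rewrite hnorm_hsub_sym in H0, H1.
      assert (hnorm (hsub (u N) l) * hnorm v <= eps / (hnorm v + 1) * hnorm v).
      { apply Rmult_le_compat_r; lra. }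
      assert (eps / (hnorm v + 1) * hnorm v < eps).
      { apply (Rmult_lt_reg_r (hnorm v + 1)); [lra|].
        unfold Rdiv. replace (eps * / (hnorm v + 1) * hnorm v * (hnorm v + 1))
          with (eps * hnorm v * ((hnorm v + 1) * / (hnorm v + 1))) by ring.
        rewrite Rinv_r by lra. nra. }
      split; lra. }
    apply C_ext; simpl; apply abs_small_zero; intros eps He; apply B; auto.
Qed.

Lemma K_inv {G : TopGroup} {H : HilbertSpace} (pi : URep G H) g y :
  Kp pi y -> Kp pi (pi g y).
Proof.
  intros Hy L HL v Hv. rewrite rep_adj. apply (Hy L HL). apply HL; auto.
Qed.

Lemma span_map_down {H : HilbertSpace} {P : H -> Prop} (c : csub P)
  (l : list (subH P c)) (w : subH P c) :
  in_span l w -> in_span (map (@proj1_sig H P) l) (proj1_sig w).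
Proof.
  revert w; induction l as [|v l IH]; simpl; intros w Hw.
  - subst; reflexivity.
  - destruct Hw as [a [y [Hy ->]]]. exists a, (proj1_sig y). split; auto.
Qed.

Lemma span_map_up {H : HilbertSpace} {P : H -> Prop} (c : csub P)
  (l : list (subH P c)) (u : H) :
  in_span (map (@proj1_sig H P) l) u -> exists w : subH P c, in_span l w /\ proj1_sig w = u.
Proof.
  revert u; induction l as [|v l IH]; simpl; intros u Hu.
  - exists (@hzero (subH P c)); split; simpl; auto.
  - destruct Hu as [a [y [Hy ->]]]. destruct (IH y Hy) as [w [Hw Ew]].
    exists (hadd (hscal a v) w). split.
    + exists a, w; auto.
    + simpl. rewrite Ew. reflexivity.
Qed.
Lemma span_in_S {H : HilbertSpace} (S : H -> Prop) (l : list H) w :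
  S hzero -> (forall x y, S x -> S y -> S (hadd x y)) -> (forall a x, S x -> S (hscal a x)) ->
  (forall v, In v l -> S v) -> in_span l w -> S w.
Proof.
  intros S0 Sa Ss; revert w; induction l as [|v l IH]; simpl; intros w Hl Hw.
  - subst; auto.
  - destruct Hw as [a [y [Hy ->]]]. apply Sa; auto.
Qed.

Lemma K_contra {G : TopGroup} (Q : G -> Prop) (eps0 : R)
  (hyp4 : forall (H : HilbertSpace) (pi : URep G H),
      (exists x, almost_invariant pi Q eps0 x) -> has_nonzero_fd_subrep pi)
  {H : HilbertSpace} (pi : URep G H) (t : H) :
  Kp pi t -> almost_invariant pi Q eps0 t -> False.
Proof.
  intros Kt Ai.
  set (c := K_csub pi).
  set (rho := subRep (Kp pi) c pi (fun g y Hy => K_inv pi g y Hy)).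
  destruct (hyp4 (subH (Kp pi) c) rho) as [S [S0 [Sa [Ss [Sg [[l [Hl Hsp]] [x0 [Sx0 Hx0]]]]]]]].
  { exists (exist (Kp pi) t Kt). exact Ai. }
  set (L := map (@proj1_sig H (Kp pi)) l).
  assert (HL : inv_list pi L).
  { intros g u Hu. destruct (span_map_up c l u Hu) as [w [Hw <-]].
    assert (Sw : S w) by (apply (span_in_S S l); auto).
    apply (span_map_down c l (rho g w)). apply Hsp, Sg, Sw. }
  apply Hx0. apply sig_eq. simpl. apply hinner_def.
  apply (proj2_sig x0 L HL). apply (span_map_down c l). apply Hsp; auto.
Qed.
Lemma archi (e : R) : e > 0 -> exists K : nat, forall n, (n >= K)%nat -> 1 / (INR n + 1) < e.
Proof.
  intros He. destruct (INR_unbounded (1 / e)) as [K HK]. exists K. intros n Hn.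
  apply le_INR in Hn. pose proof (pos_INR n).
  apply (Rmult_lt_reg_r (INR n + 1)); [lra|].
  unfold Rdiv; rewrite Rmult_assoc, Rinv_l, Rmult_1_r by lra.
  assert (A1 : 1 / e * e = 1) by (field; lra).
  assert (A2 : 1 / e < INR n + 1) by lra.
  apply (Rmult_lt_compat_r e) in A2; lra.
Qed.

Lemma hnorm_le_sq_conv {H : HilbertSpace} (a b : H) :
  hnorm a <= hnorm b -> Cre (hinner a a) <= Cre (hinner b b).
Proof.
  intros Hab. rewrite <- (hnorm_sq a), <- (hnorm_sq b).
  pose proof (hnorm_pos a). apply Rmult_le_compat; lra.
Qed.

Lemma norm_tri_sub {H : HilbertSpace} (a b : H) : hnorm a <= hnorm b + hnorm (hsub a b).
Proof.
  replace a with (hadd b (hsub a b)) at 1 by veq. apply hnorm_triangle.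
Qed.

Fixpoint accum {H : HilbertSpace} (f : nat -> list H) (k : nat) : list H :=
  match k with 0 => f 0%nat | S k' => accum f k' ++ f (S k') end.

Lemma accum_inv {G : TopGroup} {H : HilbertSpace} (pi : URep G H) f :
  (forall k, inv_list pi (f k)) -> forall k, inv_list pi (accum f k).
Proof. intros Hf k; induction k; simpl; auto. apply inv_app; auto. Qed.

Lemma accum_f {H : HilbertSpace} (f : nat -> list H) k u :
  in_span (f k) u -> in_span (accum f k) u.
Proof. destruct k; simpl; auto. apply span_app_r. Qed.

Lemma accum_mono {H : HilbertSpace} (f : nat -> list H) k m u :
  (k <= m)%nat -> in_span (accum f k) u -> in_span (accum f m) u.
Proof.
  intros Hkm; induction Hkm; auto. intros Hu; simpl; apply span_app_l; auto.
Qed.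

Lemma dist_mono {H : HilbertSpace} (l1 l2 : list H) x :
  (forall u, in_span l1 u -> in_span l2 u) ->
  hnorm (hsub x (proj l2 x)) <= hnorm (hsub x (proj l1 x)).
Proof. intros Hs; apply best_approx, Hs, proj_span. Qed.

Lemma main_claim {G : TopGroup} (Q : G -> Prop) (eps0 : R)
  (hyp4 : forall (H : HilbertSpace) (pi : URep G H),
      (exists x, almost_invariant pi Q eps0 x) -> has_nonzero_fd_subrep pi)
  {H : HilbertSpace} (pi : URep G H) (x : H) (D delta : R) :
  eps0 > 0 -> 0 <= D -> D < delta * hnorm x -> delta <= eps0 / 2 ->
  (forall g, Q g -> hnorm (hsub (pi g x) x) <= D) ->
  exists L, inv_list pi L /\ hnorm (hsub x (proj L x)) <= hnorm x / 2.
Proof.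
  intros He0 HD0 HD Hdel HQ.
  apply NNPP; intros Hc.
  assert (Hbig : forall L, inv_list pi L -> hnorm (hsub x (proj L x)) > hnorm x / 2).
  { intros L HL. apply Rnot_le_gt. intros Hle. apply Hc. exists L; auto. }
  set (dist := fun L => hnorm (hsub x (proj L x))).
  set (E := fun r => exists L, inv_list pi L /\ r = - dist L).
  assert (Eb : bound E).
  { exists 0. intros r [L [_ ->]]. unfold dist. pose proof (hnorm_pos (hsub x (proj L x))). lra. }
  assert (En : exists r, E r) by (exists (- dist nil); exists nil; split; auto; apply inv_nil).
  destruct (completeness E Eb En) as [m [Hub Hlub]].
  set (d := - m).
  assert (dlow : forall L, inv_list pi L -> d <= dist L).
  { intros L HL. pose proof (Hub (- dist L) (ex_intro _ L (conj HL eq_refl))). unfold d; lra. }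
  assert (dapprox : forall eta, eta > 0 -> exists L, inv_list pi L /\ dist L < d + eta).
  { intros eta Heta. apply NNPP; intros Hn.
    assert (m <= - d - eta).
    { apply Hlub. intros r [L [HL ->]]. apply Rnot_lt_le. intros Hlt. apply Hn.
      exists L; split; auto. lra. }
    unfold d in H0; lra. }
  assert (dbig : d >= hnorm x / 2).
  { assert (m <= - (hnorm x / 2)).
    { apply Hlub. intros r [L [HL ->]]. pose proof (Hbig L HL). unfold dist; lra. }
    unfold d; lra. }
  assert (fex : forall k : nat, exists L, inv_list pi L /\ dist L < d + 1 / (INR k + 1)).
  { intros k; apply dapprox. pose proof (pos_INR k).
    apply Rdiv_lt_0_compat; lra. }
  set (f := fun k => proj1_sig (constructive_indefinite_description _ (fex k))).
  assert (Hf : forall k, inv_list pi (f k) /\ dist (f k) < d + 1 / (INR k + 1)).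
  { intros k; unfold f; destruct (constructive_indefinite_description _ _); auto. }
  set (W := accum f).
  assert (HWi : forall k, inv_list pi (W k)) by (apply accum_inv; intros k; apply Hf).
  assert (HWd : forall k, d <= dist (W k) < d + 1 / (INR k + 1)).
  { intros k; split; [apply dlow, HWi|].
    eapply Rle_lt_trans; [| apply (Hf k)]. apply dist_mono. intros u; apply accum_f. }
  set (t := fun k => hsub x (proj (W k) x)).
  assert (Hcau_sq : forall k m, (k <= m)%nat ->
     Cre (hinner (hsub (t k) (t m)) (hsub (t k) (t m))) =
     dist (W k) * dist (W k) - dist (W m) * dist (W m)).
  { intros k m' Hkm. unfold dist. rewrite !hnorm_sq.
    assert (Ept : Cre (hinner (t k) (t k)) = Cre (hinner (hsub (t k) (t m')) (hsub (t k) (t m')))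
                 + Cre (hinner (t m') (t m'))).
    { rewrite <- (pythagoras (W m')).
      - f_equal; f_equal; veq.
      - unfold t. replace (hsub (hsub x (proj (W k) x)) (hsub x (proj (W m') x)))
          with (hsub (proj (W m') x) (proj (W k) x)) by veq.
        apply span_sub; [apply proj_span|]. apply (accum_mono f k m'); auto. apply proj_span.
      - apply proj_orth. }
    unfold t in *; lra. }
  pose proof (Rge_le _ _ dbig) as dbig'.
  assert (dpos : 0 <= d) by (pose proof (hnorm_pos x); lra).
  assert (Hcau : forall e, e > 0 -> exists K, forall n m', (n >= K)%nat -> (m' >= K)%nat ->
                   hnorm (hsub (t n) (t m')) < e).
  { intros e He.
    destruct (archi (e * e / (2 * d + 1))) as [K HK].
    { apply Rdiv_lt_0_compat; nra. }
    exists K.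
    assert (gen : forall n m', (n >= K)%nat -> (n <= m')%nat -> hnorm (hsub (t n) (t m')) < e).
    { intros n m' Hn Hnm. specialize (HK n Hn).
      pose proof (HWd n) as [A1 A2]. pose proof (HWd m') as [B1 B2].
      pose proof (Hcau_sq n m' Hnm) as C1.
      set (h := 1 / (INR n + 1)) in *.
      assert (hpos : 0 < h) by (unfold h; pose proof (pos_INR n); apply Rdiv_lt_0_compat; lra).
      assert (hle : h <= 1).
      { unfold h. pose proof (pos_INR n). apply (Rmult_le_reg_r (INR n + 1)); [lra|].
        unfold Rdiv; rewrite Rmult_assoc, Rinv_l by lra. lra. }
      assert (h * (2 * d + 1) < e * e).
      { apply (Rmult_lt_compat_r (2 * d + 1)) in HK; [|lra].
        unfold Rdiv in HK. rewrite Rmult_assoc, Rinv_l, Rmult_1_r in HK by lra. lra. }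
      assert (Cre (hinner (hsub (t n) (t m')) (hsub (t n) (t m'))) < e * e).
      { rewrite C1. assert (dist (W n) * dist (W n) <= (d + h) * (d + h)).
        { apply Rmult_le_compat; lra. }
        assert (d * d <= dist (W m') * dist (W m')) by (apply Rmult_le_compat; lra).
        nra. }
      rewrite <- hnorm_sq in H1. pose proof (hnorm_pos (hsub (t n) (t m'))). nra. }
    intros n m' Hn Hm. destruct (Nat.le_ge_cases n m') as [Hnm|Hnm].
    - apply gen; auto.
    - rewrite hnorm_hsub_sym. apply gen; auto. }
  destruct (hcomplete H t Hcau) as [tl Htl].
  assert (pick : forall e, e > 0 -> exists n, 1 / (INR n + 1) < e /\ hnorm (hsub (t n) tl) < e).
  { intros e He. destruct (archi e He) as [K1 HK1]. destruct (Htl e He) as [K2 HK2].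
    exists (Nat.max K1 K2). split; [apply HK1 | apply HK2]; lia. }
  assert (tnorm : hnorm tl = d).
  { apply Rle_antisym.
    - apply Rnot_lt_le; intros Hlt.
      destruct (pick ((hnorm tl - d) / 3)) as [n [A B]]; [lra|].
      pose proof (norm_tri_sub tl (t n)). rewrite hnorm_hsub_sym in H0.
      pose proof (HWd n). unfold dist, t in *. lra.
    - apply Rnot_lt_le; intros Hlt.
      destruct (pick ((d - hnorm tl) / 3)) as [n [A B]]; [lra|].
      pose proof (norm_tri_sub (t n) tl).
      pose proof (HWd n). unfold dist, t in *. lra. }
  assert (tK : Kp pi tl).
  { intros L HL v Hv.
    assert (far : forall lam, d <= hnorm (hsub tl (hscal lam v))).
    { intros lam. apply Rnot_lt_le; intros Hlt.
      destruct (pick ((d - hnorm (hsub tl (hscal lam v))) / 2)) as [n [_ B]]; [lra|].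
      assert (Hi : inv_list pi (W n ++ L)) by (apply inv_app; auto).
      pose proof (dlow _ Hi) as D1.
      assert (D2 : dist (W n ++ L) <= hnorm (hsub x (hadd (proj (W n) x) (hscal lam v)))).
      { apply best_approx. apply span_app. exists (proj (W n) x), (hscal lam v).
        repeat split; [apply proj_span | apply span_scal; auto]. }
      replace (hsub x (hadd (proj (W n) x) (hscal lam v))) with (hsub (t n) (hscal lam v))
        in D2 by (unfold t; veq).
      pose proof (norm_tri_sub (hsub (t n) (hscal lam v)) (hsub tl (hscal lam v))) as D3.
      replace (hsub (hsub (t n) (hscal lam v)) (hsub tl (hscal lam v))) with (hsub (t n) tl)
        in D3 by veq.
      lra. }
    destruct (Req_dec (Cre (hinner v v)) 0) as [Ev|Ev].
    - apply hinner_self_zero in Ev. subst v. apply hinner_zero_r.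
    - pose proof (cs_expand tl v _ eq_refl Ev) as X.
      specialize (far (mkC (Cre (hinner tl v) / Cre (hinner v v)) (Cim (hinner tl v) / Cre (hinner v v)))).
      rewrite <- tnorm in far.
      pose proof (hnorm_pos tl) as Ptl.
      assert (Ht2 : Cre (hinner tl tl) <= Cre (hinner (hsub tl (hscal (mkC (Cre (hinner tl v) / Cre (hinner v v))
                         (Cim (hinner tl v) / Cre (hinner v v))) v)) (hsub tl (hscal (mkC (Cre (hinner tl v) / Cre (hinner v v))
                         (Cim (hinner tl v) / Cre (hinner v v))) v)))).
      { apply hnorm_le_sq_conv; lra. }
      rewrite X in Ht2.
      pose proof (hinner_pos v).
      assert (Pv : 0 < Cre (hinner v v)) by lra.
      assert (Z : (Cre (hinner tl v) ^ 2 + Cim (hinner tl v) ^ 2) / Cre (hinner v v) <= 0) by lra.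
      assert (Z2 : Cre (hinner tl v) ^ 2 + Cim (hinner tl v) ^ 2 <= 0).
      { apply (Rmult_le_compat_r (Cre (hinner v v))) in Z; [|lra].
        unfold Rdiv in Z. rewrite Rmult_assoc, Rinv_l in Z by lra. lra. }
      apply C_ext; simpl; nra. }
  assert (tai : forall g, Q g -> hnorm (hsub (pi g tl) tl) <= D).
  { intros g Hg.
    assert (Hn : forall n, hnorm (hsub (pi g (t n)) (t n)) <= D).
    { intros n. unfold t. rewrite rep_sub, <- proj_comm by auto.
      replace (hsub (hsub (pi g x) (proj (W n) (pi g x))) (hsub x (proj (W n) x)))
        with (hsub (hsub (pi g x) x) (hsub (proj (W n) (pi g x)) (proj (W n) x))) by veq.
      rewrite <- proj_sub. eapply Rle_trans; [apply coproj_contr|]. apply HQ; auto. }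
    apply Rnot_lt_le; intros Hlt.
    destruct (pick ((hnorm (hsub (pi g tl) tl) - D) / 3)) as [n [_ B]]; [lra|].
    pose proof (norm_tri_sub (hsub (pi g tl) tl) (hsub (pi g (t n)) (t n))) as T1.
    replace (hsub (hsub (pi g tl) tl) (hsub (pi g (t n)) (t n)))
      with (hadd (pi g (hsub tl (t n))) (hsub (t n) tl)) in T1
      by (rewrite rep_sub; veq).
    pose proof (hnorm_triangle (pi g (hsub tl (t n))) (hsub (t n) tl)) as T2.
    rewrite rep_norm, hnorm_hsub_sym in T2. specialize (Hn n). lra. }
  apply (K_contra Q eps0 hyp4 pi tl tK).
  exists D. split; auto. split; [|exact tai].
  rewrite tnorm. pose proof (hnorm_pos x).
  assert (delta * hnorm x <= eps0 / 2 * hnorm x) by (apply Rmult_le_compat_r; lra).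
  nra.
Qed.
Lemma build_n {G : TopGroup} (Q Qn : G -> Prop) (eps0 en : R)
  (hyp4 : forall (H : HilbertSpace) (pi : URep G H),
      (exists x, almost_invariant pi Q eps0 x) -> has_nonzero_fd_subrep pi) :
  (forall g, Q g -> Qn g) -> eps0 > 0 -> en > 0 -> ~ Kazhdan_set G Qn ->
  exists (Hn : HilbertSpace) (pn : URep G Hn),
      finite_dimensional Hn /\
      ~ has_nonzero_invariant pn /\
      exists a : Hn, hnorm a = 1 /\
        exists delta, 0 <= delta /\ delta < en /\
          forall g, Qn g -> hnorm (hsub (pn g a) a) <= delta.
Proof.
  intros HQQ He0 Hen HK.
  set (dl := Rmin en eps0 / 2).
  assert (Hdl : dl > 0) by (unfold dl; apply Rmin_case; lra).
  assert (Ex : exists (H : HilbertSpace) (pi : URep G H),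
             (exists x, almost_invariant pi Qn dl x) /\ ~ has_nonzero_invariant pi).
  { apply NNPP; intros Hn. apply HK. exists dl; split; auto.
    intros H pi Hx. apply NNPP; intros Hni. apply Hn. exists H, pi; auto. }
  destruct Ex as [H [pi [[x [D [HD0 [HD HDq]]]] Hni]]].
  pose proof (hnorm_pos x) as Hx0.
  assert (Hxp : 0 < hnorm x).
  { destruct (Req_dec (hnorm x) 0) as [E|E]; [rewrite E in HD; lra | lra]. }
  destruct (main_claim Q eps0 hyp4 pi x D dl He0 HD0 HD) as [L [HL Hdist]].
  { unfold dl. pose proof (Rmin_r en eps0). lra. }
  { intros g Hg; apply HDq; auto. }
  set (s := proj L x).
  assert (Hs : hnorm x / 2 <= hnorm s).
  { pose proof (proj_pyth L x) as Py. fold s in Py.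
    rewrite <- !hnorm_sq in Py. pose proof (hnorm_pos s).
    pose proof (hnorm_pos (hsub x s)).
    assert (hnorm (hsub x s) * hnorm (hsub x s) <= hnorm x / 2 * (hnorm x / 2)).
    { apply Rmult_le_compat; auto. }
    nra. }
  assert (Hsp : 0 < hnorm s) by lra.
  assert (Hsq : forall g, Qn g -> hnorm (hsub (pi g s) s) <= D).
  { intros g Hg. unfold s. rewrite <- proj_comm by auto. rewrite <- proj_sub.
    eapply Rle_trans; [apply proj_contr | apply HDq; auto]. }
  set (c := span_csub L).
  set (rho := subRep (in_span L) c pi (fun g v Hv => HL g v Hv)).
  exists (subH (in_span L) c), rho. split; [|split].
  -
    set (z := @hzero (subH (in_span L) c)).
    set (lift := fun v : H => match excluded_middle_informative (in_span L v) with
                              | left h => exist (in_span L) v h | right _ => z end).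
    exists (map lift L). intros w.
    assert (Em : map (@proj1_sig H (in_span L)) (map lift L) = L).
    { rewrite map_map. rewrite <- (map_id L) at 2. apply map_ext_in. intros v Hv.
      unfold lift. destruct (excluded_middle_informative _) as [h|h]; auto.
      exfalso; apply h, span_elem; auto. }
    assert (Pw : in_span (map (@proj1_sig H (in_span L)) (map lift L)) (proj1_sig w)).
    { rewrite Em. exact (proj2_sig w). }
    destruct (span_map_up c _ _ Pw) as [w' [Hw' Ew']].
    replace w with w' by (apply sig_eq; auto). exact Hw'.
  - intros [w [Hw0 Hwi]]. apply Hni. exists (proj1_sig w). split.
    + intros E. apply Hw0. apply sig_eq. exact E.
    + intros g. exact (f_equal (@proj1_sig H (in_span L)) (Hwi g)).
  - set (k := mkC (1 / hnorm s) 0).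
    exists (exist (in_span L) (hscal k s) (span_scal L k s (proj_span L x))).
    split.
    + change (hnorm (hscal k s) = 1). unfold k. rewrite hnorm_scal_real.
      rewrite Rabs_pos_eq by (apply Rlt_le; apply Rdiv_lt_0_compat; lra). field; lra.
    + exists (D / hnorm s). split; [apply Rmult_le_pos; [lra | apply Rlt_le, Rinv_0_lt_compat; lra]|]. split.
      * apply (Rmult_lt_reg_r (hnorm s)); auto. unfold Rdiv.
        rewrite Rmult_assoc, Rinv_l, Rmult_1_r by lra.
        assert (dl * hnorm x <= en / 2 * hnorm x).
        { apply Rmult_le_compat_r; auto. unfold dl. pose proof (Rmin_l en eps0). lra. }
        nra.
      * intros g Hg. change (hnorm (hsub (pi g (hscal k s)) (hscal k s)) <= D / hnorm s).
        rewrite rep_scal. replace (hsub (hscal k (pi g s)) (hscal k s)) with (hscal k (hsub (pi g s) s)) by veq.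
        unfold k. rewrite hnorm_scal_real.
        rewrite Rabs_pos_eq by (apply Rlt_le; apply Rdiv_lt_0_compat; lra).
        specialize (Hsq g Hg). unfold Rdiv. rewrite Rmult_1_l, Rmult_comm.
        apply Rmult_le_compat_r; auto. apply Rlt_le, Rinv_0_lt_compat; auto.
Qed.

Theorem lemma6p1 (G : TopGroup) (W : nat -> G -> Prop) (Q : G -> Prop)
  (eps0 : R) (eps : nat -> R) :
  (* (W_n)_{n>=1} increasing with union G *)
  (forall n, (1 <= n)%nat -> forall g, W n g -> W (S n) g) ->
  (forall g, exists n, (1 <= n)%nat /\ W n g) ->
  eps0 > 0 ->
  (forall (H : HilbertSpace) (pi : URep G H),
      (exists x, almost_invariant pi Q eps0 x) -> has_nonzero_fd_subrep pi) ->
  (* Q_n = W_n u Q is not Kazhdan for any n >= 1 *)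
  (forall n, (1 <= n)%nat -> ~ Kazhdan_set G (fun g => W n g \/ Q g)) ->
  (* (eps_n)_{n>=1} positive, decreasing to 0, eps_1 <= eps0 *)
  (forall n, (1 <= n)%nat -> eps n > 0) ->
  (forall n, (1 <= n)%nat -> eps (S n) <= eps n) ->
  Un_cv eps 0 ->
  eps 1%nat <= eps0 ->
  exists (Hs : nat -> HilbertSpace) (pis : forall n, URep G (Hs n)),
    forall n, (1 <= n)%nat ->
      finite_dimensional (Hs n) /\
      ~ has_nonzero_invariant (pis n) /\
      exists a : Hs n, hnorm a = 1 /\
        exists delta, 0 <= delta /\ delta < eps n /\
          forall g, (W n g \/ Q g) -> hnorm (hsub (pis n g a) a) <= delta.
Proof.
  intros _ _ He0 hyp4 HK Hpos _ _ _.
  assert (E1 : forall n, (1 <= n)%nat -> exists (Hn : HilbertSpace) (pn : URep G Hn),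
      finite_dimensional Hn /\ ~ has_nonzero_invariant pn /\
      exists a : Hn, hnorm a = 1 /\
        exists delta, 0 <= delta /\ delta < eps n /\
          forall g, (W n g \/ Q g) -> hnorm (hsub (pn g a) a) <= delta).
  { intros n Hn. apply (build_n Q _ eps0); auto. }
  assert (E2 : forall n, exists (Hn : HilbertSpace) (pn : URep G Hn), (1 <= n)%nat ->
      finite_dimensional Hn /\ ~ has_nonzero_invariant pn /\
      exists a : Hn, hnorm a = 1 /\
        exists delta, 0 <= delta /\ delta < eps n /\
          forall g, (W n g \/ Q g) -> hnorm (hsub (pn g a) a) <= delta).
  { intros n. destruct (Compare_dec.le_lt_dec 1 n) as [Hn|Hn].
    - destruct (E1 n Hn) as [Hn' [pn P]]. exists Hn', pn; auto.
    - destruct (E1 1%nat (le_n 1)) as [Hn' [pn P]]. exists Hn', pn. intros; lia. }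
  set (Hs := fun n => proj1_sig (constructive_indefinite_description _ (E2 n))).
  assert (E3 : forall n, exists pn : URep G (Hs n), _) by
    (intros n; exact (proj2_sig (constructive_indefinite_description _ (E2 n)))).
  exists Hs, (fun n => proj1_sig (constructive_indefinite_description _ (E3 n))).
  intros n Hn. exact (proj2_sig (constructive_indefinite_description _ (E3 n)) Hn).
Qed.
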